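(* For every directed co-graph $G$, $\mathrm{dpw}(G)=\mathrm{dtw}(G)$.
   Context: Digraphs are finite, without loops or multiple arcs. Operations on vertex-disjoint digraphs $G_1,\ldots,G_k$: the disjoint union $G_1\oplus\cdots\oplus G_k$ (union of vertex and arc sets); the series composition $G_1\otimes\cdots\otimes G_k$ (disjoint union plus all arcs between vertices of $G_i$ and $G_j$ for all $i\neq j$, in both directions); the order composition $G_1\oslash\cdots\oslash G_k$ (disjoint union plus all arcs from vertices of $G_i$ to vertices of $G_j$ for all $i<j$). Directed co-graphs: every single-vertex digraph is a directed co-graph, and if $G_1,\ldots,G_k$ are vertex-disjoint directed co-graphs then their disjoint union, series composition and order composition are directed co-graphs. Directed path-width: a directed path-decomposition of $G=(V,E)$ is a sequence $(X_1,\ldots,X_r)$ of subsets of $V$ with $\bigcup X_i=V$, for each arc $(u,v)$ some $i\le j$ with $u\in X_i,v\in X_j$, and for each vertex the indices of bags containing it forming an interval; width $\max|X_i|-1$; $\mathrm{dpw}(G)$ is the minimum width. Directed tree-width: for $Z\subseteq V$, $S\subseteq V$ is $Z$-normal if no directed walk in $G-Z$ with first and last vertex in $S$ uses a vertex of $G-(Z\cup S)$. A directed tree-decomposition is $(T,\mathcal{X},\mathcal{W})$ with $T=(V_T,E_T)$ an out-tree (rooted tree with arcs directed away from the root; $u\le v$ means a directed path of $\ge0$ arcs from $u$ to $v$), $\mathcal{X}=\{X_e:e\in E_T\}$, $\mathcal{W}=\{W_r:r\in V_T\}$ subsets of $V$, such that $\mathcal{W}$ partitions $V$ into nonempty sets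 and for each $(u,v)\in E_T$ the set $\bigcup\{W_r: v\le r\}$ is $X_{(u,v)}$-normal; width $\max_r|W_r\cup\bigcup_{e\sim r}X_e|-1$ ($e\sim r$: $r$ is an end of $e$); $\mathrm{dtw}(G)$ is the minimum width. *)

(* Defs.v *)
(* Digraphs: a finite vertex type T with an arc relation E
   (irreflexivity = no loops; a relation has no multiple arcs). *)
From mathcomp Require Import all_boot.
Set Implicit Arguments. Unset Strict Implicit. Unset Printing Implicit Defensive.

Section Digraphs.
Variable T : finType.
Variable E : rel T.

Definition parts_disjoint (s : seq {set T}) : Prop :=
  forall i j, i < size s -> j < size s -> i != j ->
    [disjoint nth set0 s i & nth set0 s j].

(* dcograph_on A : the subdigraph of (T,E) induced by A is a directed
   co-graph. The k-ary operations (k >= 1) are applied to the induced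
   subdigraphs on the (pairwise disjoint) parts of A; the arcs inside the
   parts are those of the induced subdigraphs, the arcs between distinct
   parts are fixed by the operation. *)
Inductive dcograph_on : {set T} -> Prop :=
| DC_single (x : T) : dcograph_on [set x]
| DC_union (s : seq {set T}) :
    0 < size s -> parts_disjoint s ->
    (forall B, B \in s -> dcograph_on B) ->
    (forall i j x y, i < size s -> j < size s -> i != j ->
       x \in nth set0 s i -> y \in nth set0 s j -> ~~ E x y) ->
    dcograph_on (\bigcup_(B <- s) B)
| DC_series (s : seq {set T}) :
    0 < size s -> parts_disjoint s ->
    (forall B, B \in s -> dcograph_on B) ->
    (forall i j x y, i < size s -> j < size s -> i != j ->
       x \in nth set0 s i -> y \in nth set0 s j -> E x y) ->
    dcograph_on (\bigcup_(B <- s) B)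
| DC_order (s : seq {set T}) :
    0 < size s -> parts_disjoint s ->
    (forall B, B \in s -> dcograph_on B) ->
    (forall i j x y, i < size s -> j < size s -> i < j ->
       x \in nth set0 s i -> y \in nth set0 s j -> E x y && ~~ E y x) ->
    dcograph_on (\bigcup_(B <- s) B).

Definition directed_cograph : Prop := dcograph_on [set: T].

Definition is_dpd (s : seq {set T}) : Prop :=
  [/\ (\bigcup_(X <- s) X) = [set: T],
      (forall u v, E u v -> exists i j, [/\ i <= j, j < size s,
                     u \in nth set0 s i & v \in nth set0 s j]) &
      (forall x i j k, i <= j -> j <= k -> k < size s ->
         x \in nth set0 s i -> x \in nth set0 s k -> x \in nth set0 s j)].

Definition dpd_width (s : seq {set T}) : nat := (\max_(X <- s) #|X|) - 1.

Definition is_dpw (k : nat) : Prop :=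
  (exists s, is_dpd s /\ dpd_width s = k) /\
  (forall s, is_dpd s -> k <= dpd_width s).

Definition normal (Z S : {set T}) : Prop :=
  forall (x : T) (p : seq T), path E x p ->
    all (fun v => v \notin Z) (x :: p) ->
    x \in S -> last x p \in S ->
    all (fun v => v \in S) (x :: p).

(* out-tree on the node set 'I_m with arc relation ET: a root r with no
   in-arcs, every other node has exactly one in-arc, all nodes reachable
   from r. u <= v in the tree is connect ET u v. *)
Definition out_tree (m : nat) (ET : rel 'I_m) : Prop :=
  exists r : 'I_m,
    [/\ forall u, ~~ ET u r,
        forall v, v != r -> #|[set u | ET u v]| = 1 &
        forall v, connect ET r v].

(* directed tree-decomposition (T_tree, X, W); X u v is X_e for e = (u,v) *)
Definition is_dtd (m : nat) (ET : rel 'I_m)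
    (X : 'I_m -> 'I_m -> {set T}) (W : 'I_m -> {set T}) : Prop :=
  [/\ out_tree ET,
      (forall r, W r != set0),
      (forall r r', r != r' -> [disjoint W r & W r']),
      (\bigcup_r W r) = [set: T] &
      (forall u v, ET u v -> normal (X u v) (\bigcup_(r | connect ET v r) W r))].

Definition dtd_bag (m : nat) (ET : rel 'I_m)
    (X : 'I_m -> 'I_m -> {set T}) (W : 'I_m -> {set T}) (r : 'I_m) : {set T} :=
  W r :|: (\bigcup_(u | ET u r) X u r) :|: (\bigcup_(v | ET r v) X r v).

Definition dtd_width (m : nat) (ET : rel 'I_m)
    (X : 'I_m -> 'I_m -> {set T}) (W : 'I_m -> {set T}) : nat :=
  (\max_r #|dtd_bag ET X W r|) - 1.

Definition is_dtw (k : nat) : Prop :=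
  (exists m (ET : rel 'I_m) X W, is_dtd ET X W /\ dtd_width ET X W = k) /\
  (forall m (ET : rel 'I_m) X W, is_dtd ET X W -> k <= dtd_width ET X W).

End Digraphs.

(* Main.v *)
Require Import Defs.
From mathcomp Require Import all_boot zify.
Set Implicit Arguments. Unset Strict Implicit. Unset Printing Implicit Defensive.
Set Warnings "-notation-overridden".

Lemma path_cross (V : eqType) (e : rel V) (Q : pred V) x p :
  path e x p -> Q x -> ~~ Q (last x p) ->
  exists u w, [/\ e u w, Q u, ~~ Q w, u \in x :: p & w \in x :: p].
Proof.
elim: p x => [|y p IH] x /=; first by move=> _ ->.
case/andP=> exy pp Qx Ql.
case Qy: (Q y).
- have [u [w [euw Qu Qw up wp]]] := IH y pp Qy Ql.
  by exists u, w; split=> //; rewrite in_cons ?up ?wp orbT.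
- by exists x, y; split=> //; rewrite ?Qy // !in_cons eqxx ?orbT.
Qed.

Section G.
Variable T : finType.
Variable E : rel T.

Lemma mem_bigcup_seq (F : {set T} -> {set T}) (s : seq {set T}) x :
  (x \in \bigcup_(X <- s) F X) = has (fun X => x \in F X) s.
Proof.
elim: s => [|X s IH]; first by rewrite big_nil in_set0.
by rewrite big_cons in_setU IH.
Qed.

Lemma mem_bigcup_nth (s : seq {set T}) x :
  reflect (exists2 i, i < size s & x \in nth set0 s i) (x \in \bigcup_(X <- s) X).
Proof. rewrite mem_bigcup_seq; exact: (has_nthP set0). Qed.

Lemma normal_closed (Z S : {set T}) :
  (forall u w, E u w -> u \in S -> w \notin Z -> w \in S) -> normal E Z S.
Proof.
move=> H x p; elim: p x => [|y p IH] x /=; first by move=> _ _ -> .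
case/andP=> exy pp /andP [_ Hall] xS lS.
have yS : y \in S by apply: (H x) => //; case/andP: Hall.
by rewrite xS; exact: (IH y pp Hall yS lS).
Qed.

Lemma normal_sc (Z S : {set T}) a b pa pb :
  normal E Z S -> a \in S -> a \notin Z ->
  path E a pa -> last a pa = b -> all (fun v => v \notin Z) pa ->
  path E b pb -> last b pb = a -> all (fun v => v \notin Z) pb ->
  b \in S.
Proof.
move=> nS aS aZ pa_ la aa pb_ lb ab.
have := nS a (pa ++ pb).
rewrite cat_path pa_ la pb_ last_cat la lb /= aZ all_cat aa ab aS.
move=> /(_ isT isT isT isT) /andP [_ H].
have : b \in a :: pa by rewrite -la mem_last.
rewrite in_cons => /orP [/eqP -> //|bpa].
by move/allP: H; apply; rewrite mem_cat bpa.
Qed.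

Definition scw (A Z C : {set T}) := forall a b, a \in C -> b \in C ->
  exists p, [/\ path E a p, last a p = b & all (fun v => v \in A :\: Z) p].

Definition haven (A : {set T}) (k : nat) (beta : {set T} -> {set T}) :=
  forall Z, #|Z :&: A| <= k ->
    [/\ beta Z != set0, beta Z \subset A :\: Z, scw A Z (beta Z) &
        forall Z' : {set T}, Z :&: A \subset Z' -> #|Z' :&: A| <= k -> beta Z' \subset beta Z].

Definition rdpd (A : {set T}) (s : seq {set T}) :=
  [/\ \bigcup_(X <- s) X = A,
      (forall u v, u \in A -> v \in A -> E u v -> exists i j,
          [/\ i <= j, j < size s, u \in nth set0 s i & v \in nth set0 s j]) &
      (forall x i j k, i <= j -> j <= k -> k < size s ->
         x \in nth set0 s i -> x \in nth set0 s k -> x \in nth set0 s j)].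

Definition good (A : {set T}) := exists k,
  (exists beta, haven A k beta) /\
  (exists s, rdpd A s /\ all (fun X : {set T} => #|X| <= k.+1) s).


Lemma scw_sub (A A' Z C : {set T}) : A \subset A' -> scw A Z C -> scw A' Z C.
Proof.
move=> sAA' H a b aC bC; have [p [p1 p2 p3]] := H a b aC bC.
exists p; split=> //; apply/allP => v vp; have := allP p3 v vp.
by rewrite !inE => /andP [-> /(subsetP sAA')].
Qed.

Lemma haven_sub (A A' : {set T}) k beta : A \subset A' -> haven A k beta -> haven A' k beta.
Proof.
move=> sAA' H Z cZ.
have cZ1 : #|Z :&: A| <= k.
  by apply: leq_trans cZ; apply: subset_leq_card; apply: setIS.
have [h1 h2 h3 h4] := H Z cZ1; split=> //.
- apply: (subset_trans h2); exact: setSD.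
- exact: scw_sub h3.
- move=> Z' sZ cZ'; apply: h4.
  + apply: subset_trans sZ; exact: setIS.
  + by apply: leq_trans cZ'; apply: subset_leq_card; apply: setIS.
Qed.

Lemma haven_lt A k beta : haven A k beta -> k < #|A|.
Proof.
move=> H; rewrite ltnNge; apply/negP => cA.
have [h1 h2 _ _] := H A ltac:(by rewrite setIid).
case/set0Pn: h1 => x xb; move/subsetP: h2 => /(_ x xb).
by rewrite setDv in_set0.
Qed.

Lemma good_single x : good [set x].
Proof.
exists 0; split.
- exists (fun _ => [set x]) => Z cZ.
  have xZ : x \notin Z.
    apply/negP => xZ; move: cZ; rewrite leqn0 cards_eq0 => /eqP/setP/(_ x).
    by rewrite !inE xZ eqxx.
  split.
  + by apply/set0Pn; exists x; rewrite inE.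
  + by apply/subsetP => y; rewrite !inE => /eqP ->; rewrite xZ eqxx.
  + by move=> a b; rewrite !inE => /eqP -> /eqP ->; exists [::]; split.
  + by move=> *; exact: subxx.
- exists [:: [set x]]; split; last by rewrite /= cards1.
  split.
  + by rewrite big_seq1.
  + by move=> u v; rewrite !inE => /eqP -> /eqP -> _; exists 0, 0; split=> //; rewrite inE.
  + move=> y i j k' ij jk kl yi _; rewrite /= in kl.
    have j0 : j = 0 by lia.
    have i0 : i = 0 by lia.
    by rewrite j0; rewrite i0 in yi.
Qed.

Lemma rdpd_sub A s i : rdpd A s -> nth set0 s i \subset A.
Proof.
case=> U _ _; apply/subsetP => x xi; rewrite -U; apply/mem_bigcup_nth.
case: (ltnP i (size s)) => il; first by exists i.
by move: xi; rewrite nth_default // in_set0.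
Qed.

Lemma nth_cat_l (s1 s2 : seq {set T}) i : i < size s1 ->
  nth set0 (s1 ++ s2) i = nth set0 s1 i.
Proof. by move=> h; rewrite nth_cat h. Qed.

Lemma nth_cat_r (s1 s2 : seq {set T}) i : size s1 <= i ->
  nth set0 (s1 ++ s2) i = nth set0 s2 (i - size s1).
Proof. by move=> h; rewrite nth_cat ltnNge h. Qed.

Lemma rdpd_cat A1 A2 s1 s2 : rdpd A1 s1 -> rdpd A2 s2 -> [disjoint A1 & A2] ->
  (forall x y, x \in A1 -> y \in A2 -> ~~ E y x) -> rdpd (A1 :|: A2) (s1 ++ s2).
Proof.
move=> H1 H2 dA noE.
have sub1 i := rdpd_sub i H1; have sub2 i := rdpd_sub i H2.
case: H1 => U1 Ar1 I1; case: H2 => U2 Ar2 I2.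
split.
- by rewrite big_cat /= U1 U2.
- move=> u v; rewrite !inE size_cat => /orP [u1|u2] /orP [v1|v2] euv.
  + have [i [j [ij jl ui vj]]] := Ar1 u v u1 v1 euv.
    exists i, j; rewrite !nth_cat_l //; last by lia.
    split=> //; lia.
  + have /mem_bigcup_nth [i il ui] : u \in \bigcup_(X <- s1) X by rewrite U1.
    have /mem_bigcup_nth [j jl vj] : v \in \bigcup_(X <- s2) X by rewrite U2.
    exists i, (size s1 + j); rewrite nth_cat_l // nth_cat_r ?leq_addr // addKn.
    split=> //; lia.
  + by move: (noE v u v1 u2); rewrite euv.
  + have [i [j [ij jl ui vj]]] := Ar2 u v u2 v2 euv.
    exists (size s1 + i), (size s1 + j); rewrite !nth_cat_r ?leq_addr // !addKn.
    split=> //; lia.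
- move=> x i j k ij jk kl; rewrite size_cat in kl.
  case: (ltnP k (size s1)) => ks.
  + rewrite !nth_cat_l; try lia; exact: I1.
  + case: (ltnP i (size s1)) => i1.
    * rewrite nth_cat_l // nth_cat_r // => xi xk; exfalso.
      have x1 := subsetP (sub1 i) x xi; have x2 := subsetP (sub2 (k - size s1)) x xk.
      by move: (disjointFr dA x1); rewrite x2.
    * rewrite !nth_cat_r; try lia; apply: I2; lia.
Qed.

Lemma rdpd_series A1 A2 s1 : rdpd A1 s1 -> A1 != set0 ->
  rdpd (A1 :|: A2) [seq X :|: A2 | X <- s1].
Proof.
move=> H1 ne.
case: H1 => U1 Ar1 I1.
have s1n : 0 < size s1.
  by case/set0Pn: ne => x; rewrite -U1 => /mem_bigcup_nth [i il _]; lia.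
have nm i : i < size s1 -> nth set0 [seq X :|: A2 | X <- s1] i = nth set0 s1 i :|: A2.
  by move=> il; rewrite (nth_map set0).
have inb u : u \in A1 -> exists2 i, i < size s1 & u \in nth set0 s1 i.
  by rewrite -U1 => /mem_bigcup_nth.
split.
- apply/setP => x; apply/mem_bigcup_nth/idP.
  + case=> i; rewrite size_map => il; rewrite nm // !inE => /orP [xi|->]; last by rewrite orbT.
    by rewrite -U1; apply/orP; left; apply/mem_bigcup_nth; exists i.
  + rewrite inE => /orP [/inb [i il xi]|x2].
    * by exists i; rewrite ?size_map // nm // inE xi.
    * by exists 0; rewrite ?size_map // nm // inE x2 orbT.
- move=> u v; rewrite !inE size_map => /orP [u1|u2] /orP [v1|v2] euv.
  + have [i [j [ij jl ui vj]]] := Ar1 u v u1 v1 euv.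
    exists i, j; rewrite !nm; try lia.
    by rewrite !inE ui vj; split.
  + have [i il ui] := inb u u1.
    by exists i, i; rewrite !nm // !inE ui v2 orbT; split.
  + have [j jl vj] := inb v v1.
    by exists j, j; rewrite !nm // !inE vj u2 orbT; split.
  + by exists 0, 0; rewrite !nm // !inE u2 v2 !orbT; split.
- move=> x i j k ij jk kl; rewrite size_map in kl.
  rewrite !nm; try lia.
  rewrite !inE; case x2: (x \in A2); first by rewrite !orbT.
  rewrite !orbF; exact: I1.
Qed.

Lemma good_union A1 A2 : good A1 -> good A2 -> [disjoint A1 & A2] ->
  (forall x y, x \in A1 -> y \in A2 -> ~~ E y x) -> good (A1 :|: A2).
Proof.
move=> [k1 [[b1 h1] [s1 [d1 w1]]]] [k2 [[b2 h2] [s2 [d2 w2]]]] dA noE.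
have Hs k : k1 <= k -> k2 <= k ->
  exists s, rdpd (A1 :|: A2) s /\ all (fun X : {set T} => #|X| <= k.+1) s.
  move=> hk1 hk2.
  exists (s1 ++ s2); split; first exact: rdpd_cat.
  rewrite all_cat; apply/andP; split; apply/allP => X XS.
  + by apply: leq_trans (allP w1 X XS) _.
  + by apply: leq_trans (allP w2 X XS) _.
case: (leqP k2 k1) => hk.
- exists k1; split; last exact: Hs.
  exists b1; apply: haven_sub h1; exact: subsetUl.
- exists k2; split; last by apply: Hs => //; exact: ltnW.
  exists b2; apply: haven_sub h2; exact: subsetUr.
Qed.


Definition beta_ser (A1 A2 : {set T}) (b1 b2 : {set T} -> {set T}) (Z : {set T}) :=
  if A2 \subset Z then b1 Z else if A1 \subset Z then b2 Z else (A1 :|: A2) :\: Z.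

Lemma haven_series A1 A2 k1 k2 b1 b2 :
  haven A1 k1 b1 -> haven A2 k2 b2 -> [disjoint A1 & A2] ->
  (forall x y, x \in A1 -> y \in A2 -> E x y && E y x) ->
  haven (A1 :|: A2) (minn (k1 + #|A2|) (k2 + #|A1|)) (beta_ser A1 A2 b1 b2).
Proof.
move=> h1 h2 dA bothE.
set k := minn _ _; set A := A1 :|: A2.
have lt1 := haven_lt h1; have lt2 := haven_lt h2.
have cI Z : #|Z :&: A| = #|Z :&: A1| + #|Z :&: A2|.
  rewrite /A setIUr cardsU.
  suff -> : (Z :&: A1) :&: (Z :&: A2) = set0 by rewrite cards0 subn0.
  apply/setP => x; rewrite !inE; case x1: (x \in A1); last by rewrite !andbF.
  by rewrite (disjointFr dA x1) !andbF.
have kA1 : k <= k1 + #|A2| by rewrite /k geq_minl.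
have kA2 : k <= k2 + #|A1| by rewrite /k geq_minr.
have notboth Z : #|Z :&: A| <= k -> A1 \subset Z -> A2 \subset Z -> False.
  move=> cZ s1 s2; move: cZ; rewrite cI.
  rewrite (setIidPr s1) (setIidPr s2); lia.
have c1 Z : #|Z :&: A| <= k -> A2 \subset Z -> #|Z :&: A1| <= k1.
  by move=> cZ s2; move: cZ; rewrite cI (setIidPr s2); lia.
have c2 Z : #|Z :&: A| <= k -> A1 \subset Z -> #|Z :&: A2| <= k2.
  by move=> cZ s1; move: cZ; rewrite cI (setIidPr s1); lia.
have bsub Z0 : #|Z0 :&: A| <= k -> beta_ser A1 A2 b1 b2 Z0 \subset A :\: Z0.
  move=> cZ0; rewrite /beta_ser; case: ifP => s2Z.
  - have [_ h _ _] := h1 Z0 (c1 Z0 cZ0 s2Z); apply: subset_trans h _; apply: setSD; exact: subsetUl.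
  - case: ifP => s1Z; last exact: subxx.
    have [_ h _ _] := h2 Z0 (c2 Z0 cZ0 s1Z); apply: subset_trans h _; apply: setSD; exact: subsetUr.
have amono (Z0 Z' : {set T}) : Z0 :&: A \subset Z' -> A :\: Z' \subset A :\: Z0.
  move=> sZ; apply/subsetP => x; rewrite !in_setD => /andP [xZ' xA]; rewrite xA andbT.
  apply/negP => xZ0.
  have : x \in Z0 :&: A by rewrite in_setI xZ0 xA.
  by move/(subsetP sZ); rewrite (negbTE xZ').
have subIA (Z Z' B : {set T}) : B \subset A -> B \subset Z -> Z :&: A \subset Z' -> B \subset Z'.
  move=> BA BZ sZ; apply: subset_trans sZ; by rewrite subsetI BZ BA.
move=> Z cZ.
case s2Z: (A2 \subset Z).
- have bZ : beta_ser A1 A2 b1 b2 Z = b1 Z by rewrite /beta_ser s2Z.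
  rewrite bZ; have [n1 s1 sc1 m1] := h1 Z (c1 Z cZ s2Z); split=> //.
  + apply: subset_trans s1 _; apply: setSD; exact: subsetUl.
  + apply: scw_sub sc1; exact: subsetUl.
  + move=> Z' sZ cZ'.
    have s2Z' : A2 \subset Z' by apply: subIA sZ => //; exact: subsetUr.
    rewrite /beta_ser s2Z'; apply: m1; last exact: c1.
    apply: subset_trans sZ; apply: setIS; exact: subsetUl.
case s1Z: (A1 \subset Z).
- have bZ : beta_ser A1 A2 b1 b2 Z = b2 Z by rewrite /beta_ser s2Z s1Z.
  rewrite bZ; have [n2 s2 sc2 m2] := h2 Z (c2 Z cZ s1Z); split=> //.
  + apply: subset_trans s2 _; apply: setSD; exact: subsetUr.
  + apply: scw_sub sc2; exact: subsetUr.
  + move=> Z' sZ cZ'.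
    have s1Z' : A1 \subset Z' by apply: subIA sZ => //; exact: subsetUl.
    have s2Z' : (A2 \subset Z') = false.
      by apply/negP => H; exact: (notboth Z' cZ' s1Z' H).
    rewrite /beta_ser s2Z' s1Z'; apply: m2; last exact: c2.
    apply: subset_trans sZ; apply: setIS; exact: subsetUr.
- have bZ : beta_ser A1 A2 b1 b2 Z = A :\: Z by rewrite /beta_ser s2Z s1Z.
  case/subsetPn: (negbT s1Z) => c1' c1A c1Z.
  case/subsetPn: (negbT s2Z) => c2' c2A c2Z.
  have c1in : c1' \in A :\: Z by rewrite !inE c1Z c1A.
  have c2in : c2' \in A :\: Z by rewrite !inE c2Z c2A orbT.
  rewrite bZ; split.
  + by apply/set0Pn; exists c1'.
  + exact: subxx.
  + move=> a b ain bin.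
    move: (ain) (bin); rewrite !inE => /andP [aZ aA] /andP [bZ' bA].
    case/orP: aA => a1; case/orP: bA => b1'.
    * exists [:: c2'; b]; rewrite /= c2in bin.
      by case/andP: (bothE a c2' a1 c2A) => -> _; case/andP: (bothE b c2' b1' c2A) => _ ->.
    * by exists [:: b]; rewrite /= bin; case/andP: (bothE a b a1 b1') => -> _.
    * by exists [:: b]; rewrite /= bin; case/andP: (bothE b a b1' a1) => _ ->.
    * exists [:: c1'; b]; rewrite /= c1in bin.
      by case/andP: (bothE c1' a c1A a1) => _ ->; case/andP: (bothE c1' b c1A b1') => -> _.
  + move=> Z' sZ cZ'; exact: subset_trans (bsub Z' cZ') (amono Z Z' sZ).
Qed.

Lemma good_series A1 A2 : good A1 -> good A2 -> [disjoint A1 & A2] ->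
  (forall x y, x \in A1 -> y \in A2 -> E x y && E y x) -> good (A1 :|: A2).
Proof.
move=> [k1 [[b1 h1] [s1 [d1 w1]]]] [k2 [[b2 h2] [s2 [d2 w2]]]] dA bothE.
have ne (A0 : {set T}) k0 b0 : haven A0 k0 b0 -> A0 != set0.
  move=> h0; have [hn hs _ _] := h0 set0 ltac:(by rewrite set0I cards0).
  apply/set0Pn; case/set0Pn: hn => x xb; exists x; move/subsetP: hs => /(_ x xb).
  by rewrite in_setD => /andP [_ ->].
exists (minn (k1 + #|A2|) (k2 + #|A1|)); split.
  by exists (beta_ser A1 A2 b1 b2); apply: haven_series.
case: (leqP (k1 + #|A2|) (k2 + #|A1|)) => hk.
- exists [seq X :|: A2 | X <- s1]; split; first exact: rdpd_series (ne _ _ _ h1).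
  apply/allP => Y /mapP [X XS ->]; have := allP w1 X XS.
  move=> hX; rewrite cardsU; lia.
- exists [seq X :|: A1 | X <- s2]; split.
    rewrite setUC; exact: rdpd_series (ne _ _ _ h2).
  apply/allP => Y /mapP [X XS ->]; have := allP w2 X XS.
  move=> hX; rewrite cardsU; lia.
Qed.


Lemma good_fold (P : T -> T -> bool)
  (Hop : forall A1 A2, good A1 -> good A2 -> [disjoint A1 & A2] ->
     (forall x y, x \in A1 -> y \in A2 -> P x y) -> good (A1 :|: A2)) :
  forall s : seq {set T}, 0 < size s -> parts_disjoint s -> (forall B, B \in s -> good B) ->
  (forall i j x y, i < j -> j < size s -> x \in nth set0 s i -> y \in nth set0 s j -> P x y) ->
  good (\bigcup_(B <- s) B).
Proof.
elim=> [|B s IH] //= _ pd gs Pc.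
case: s IH pd gs Pc => [|B' s] IH pd gs Pc.
  by rewrite big_seq1; apply: gs; rewrite mem_seq1.
rewrite big_cons; apply: Hop.
- by apply: gs; rewrite in_cons eqxx.
- apply: IH => //.
  + by move=> i j il jl ij; exact: (pd i.+1 j.+1).
  + by move=> X Xs; apply: gs; rewrite in_cons Xs orbT.
  + by move=> i j x y ij jl; exact: (Pc i.+1 j.+1).
- rewrite -setI_eq0; apply/eqP/setP => x; rewrite !inE; apply/negP => /andP [xB].
  case/mem_bigcup_nth => j jl xj.
  have := pd 0 j.+1 isT jl isT; rewrite /= => /disjointFr /(_ xB).
  by rewrite xj.
- by move=> x y xB /mem_bigcup_nth [j jl yj]; exact: (Pc 0 j.+1).
Qed.

Lemma cograph_good A : dcograph_on E A -> good A.
Proof.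
elim=> [x|s sn pd _ gs noE|s sn pd _ gs bothE|s sn pd _ gs ordE].
- exact: good_single.
- apply: (good_fold (P := fun x y => ~~ E y x)) => //; first exact: good_union.
  move=> i j x y ij jl xi yj; apply: (noE j i) => //; lia.
- apply: (good_fold (P := fun x y => E x y && E y x)) => //; first exact: good_series.
  move=> i j x y ij jl xi yj.
  rewrite (bothE i j x y) ?(bothE j i y x) //; lia.
- apply: (good_fold (P := fun x y => ~~ E y x)) => //; first exact: good_union.
  move=> i j x y ij jl xi yj.
  by case/andP: (ordE i j x y (ltn_trans ij jl) jl ij xi yj).
Qed.


Lemma trans_idx (P : pred nat) m : P 0 -> ~~ P m -> exists i, [/\ i < m, P i & ~~ P i.+1].
Proof.
elim: m => [|m IH] P0 Pm; first by rewrite P0 in Pm.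
case: (boolP (P m)) => Pm'; first by exists m.
by have [i [im Pi Pi1]] := IH P0 Pm'; exists i; split=> //; exact: ltnW.
Qed.

Lemma dpd_lower k beta s : haven [set: T] k beta -> is_dpd E s ->
  all (fun X : {set T} => #|X| <= k) s -> False.
Proof.
move=> hv [U Ar I] ws.
set n := size s.
have cb i : #|nth set0 s i :&: [set: T]| <= k.
  rewrite setIT; case: (ltnP i n) => il; first exact: (allP ws _ (mem_nth _ il)).
  by rewrite nth_default // cards0.
have inb y : exists2 a, a < n & y \in nth set0 s a.
  by apply/mem_bigcup_nth; rewrite U inE.
pose C i := beta (nth set0 s i).
pose Q i y := [exists a : 'I_n, (i < a) && (y \in nth set0 s a)].
pose Pb i := [exists y, (y \in C i) && Q i y].
have hC i := hv _ (cb i).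
have P0 : Pb 0.
  have [ne sb _ _] := hC 0; case/set0Pn: ne => y yC.
  apply/existsP; exists y; rewrite yC /=.
  have [a al ya] := inb y; apply/existsP; exists (Ordinal al) => /=.
  rewrite ya andbT lt0n; apply/negP => /eqP a0.
  by move/subsetP: sb => /(_ y yC); rewrite !inE -a0 ya.
have n0 : 0 < n.
  by case/existsP: P0 => y /andP [_ /existsP [a _]]; exact: (leq_ltn_trans (leq0n a) (ltn_ord a)).
have Pn : ~~ Pb n.-1.
  apply/existsP => [[y /andP [_ /existsP [a /andP [ha _]]]]].
  have := ltn_ord a; lia.
have [i [il Pi Pi1]] := trans_idx P0 Pn.
case/existsP: Pi => y1 /andP [y1C Qy1].
set Z := nth set0 s i :&: nth set0 s i.+1.
have cb' j : #|nth set0 s j| <= k by have := cb j; rewrite setIT.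
have cZ : #|Z :&: [set: T]| <= k.
  by rewrite setIT; apply: leq_trans (cb' i); apply: subset_leq_card; exact: subsetIl.
have [neZ sbZ scZ mZ] := hv Z cZ.
have [ne1 sb1 sc1 m1] := hC i.+1.
have s0 : C i \subset beta Z := mZ _ ltac:(by rewrite setIT; exact: subsetIl) (cb i).
have s1 : C i.+1 \subset beta Z := mZ _ ltac:(by rewrite setIT; exact: subsetIr) (cb i.+1).
case/set0Pn: ne1 => y2 y2C.
have Qy2 : ~~ Q i y2.
  apply/existsP => [[a /andP [ia y2a]]].
  case: (eqVneq (nat_of_ord a) i.+1) => ai.
  - by move: y2a; rewrite ai => y2a; move/subsetP: sb1 => /(_ y2 y2C); rewrite in_setD y2a.
  - move/negP: Pi1; apply; apply/existsP; exists y2; rewrite y2C /=.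
    by apply/existsP; exists a; rewrite y2a andbT ltn_neqAle eq_sym ai ia.
have [p [pth lst pall]] := scZ y1 y2 (subsetP s0 _ y1C) (subsetP s1 _ y2C).
have := path_cross pth Qy1; rewrite lst => /(_ Qy2) [u [w [euw Qu Qw uin win]]].
have notZ v : v \in y1 :: p -> v \notin Z.
  rewrite in_cons => /orP [/eqP ->|vp].
  - by move/subsetP: sbZ => /(_ y1 (subsetP s0 _ y1C)); rewrite in_setD => /andP [].
  - by have := allP pall v vp; rewrite in_setD => /andP [].
have [a' [b' [ab bl ua wb]]] := Ar u w euw.
have b'i : b' <= i.
  rewrite leqNgt; apply/negP => ib; move/negP: Qw; apply; apply/existsP.
  by exists (Ordinal bl); rewrite /= ib wb.
case/existsP: Qu => a /andP [ia ua2].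
have al := ltn_ord a.
have uZ : u \in Z.
  rewrite inE; apply/andP; split.
  - exact: (I u a' i a (leq_trans ab b'i) (ltnW ia) al).
  - exact: (I u a' i.+1 a (leq_trans ab (leq_trans b'i (leqnSn i))) ia al).
by move: (notZ u uin); rewrite uZ.
Qed.


Lemma connect_step (V : finType) (e : rel V) t r :
  connect e t r -> t != r -> exists2 c, e t c & connect e c r.
Proof.
case/connectP => [[|c p]] /=; first by move=> _ ->; rewrite eqxx.
case/andP=> etc pth lst _; exists c => //; apply/connectP; by exists p.
Qed.

Lemma out_tree_acyclic m (ET : rel 'I_m) t c :
  out_tree ET -> ET t c -> connect ET c t -> False.
Proof.
case=> r [noin indeg reach] etc ct.
pose C := [set x | connect ET c x && connect ET x t].
have predC x : x \in C -> exists2 y, y \in C & ET y x.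
  rewrite inE => /andP [cx xt].
  case: (eqVneq x c) => [->|xc].
  - by exists t => //; rewrite inE ct connect0.
  - case/connectP: cx => p; case/lastP: p => [|p' z] pth lst.
      by move: xc; rewrite lst /= eqxx.
    move: pth; rewrite rcons_path => /andP [pth ez].
    rewrite last_rcons in lst; subst z.
    exists (last c p') => //.
    rewrite inE; apply/andP; split; first by apply/connectP; exists p'.
    exact: connect_trans (connect1 ez) xt.
have rC : r \notin C.
  by apply/negP => /predC [y _ eyr]; move: (noin y); rewrite eyr.
have tC : t \in C by rewrite inE ct connect0.
case/connectP: (reach t) => p pth lst.
have := path_cross (Q := fun x => x \notin C) pth rC.
rewrite -lst tC => /(_ isT) [u [w [euw uC wC _ _]]].
rewrite negbK in wC.
have [y yC eyw] := predC w wC.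
have wr : w != r by apply: contraNneq rC => <-.
have := indeg w wr.
have : [set u; y] \subset [set u0 | ET u0 w].
  by apply/subsetP => z; rewrite !inE => /orP [] /eqP ->; rewrite ?euw ?eyw.
move/subset_leq_card; rewrite cards2 => h1 h2.
have uy : u != y by apply: contraNneq uC => ->.
by move: h1; rewrite h2 uy.
Qed.


Lemma dtd_lower k beta m (ET : rel 'I_m) X W : haven [set: T] k beta -> is_dtd E ET X W ->
  (forall r, #|dtd_bag ET X W r| <= k) -> False.
Proof.
move=> hv [ot Wne Wdis WU Nrm] cb.
pose S t := \bigcup_(r | connect ET t r) W r.
pose bag := dtd_bag ET X W.
have cb2 (Z : {set T}) : #|Z| <= k -> #|Z :&: [set: T]| <= k by rewrite setIT.
have outX t c : ET t c -> X t c \subset bag t.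
  move=> etc; rewrite /bag /dtd_bag; apply: subset_trans (subsetUr _ _).
  exact: (bigcup_sup c etc).
have inX t c : ET t c -> X t c \subset bag c.
  move=> etc; rewrite /bag /dtd_bag; apply: subset_trans (subsetUl _ _).
  apply: subset_trans (subsetUr _ _); exact: (bigcup_sup t etc).
have Wb t : W t \subset bag t.
  rewrite /bag /dtd_bag; apply: subset_trans (subsetUl _ _); exact: subsetUl.
have stay (Z Z' Sx : {set T}) y : #|Z| <= k -> normal E Z' Sx -> Z' \subset Z ->
    y \in beta Z -> y \in Sx -> beta Z \subset Sx.
  move=> cZ nS sZ yB yS; have [_ sbB scB _] := hv Z (cb2 _ cZ).
  have nZ v : v \in [set: T] :\: Z -> v \notin Z'.
    by rewrite in_setD => /andP [vZ _]; exact: (contra (subsetP sZ v) vZ).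
  have allZ p : all (fun v => v \in [set: T] :\: Z) p -> all (fun v => v \notin Z') p.
    by move=> a; apply/allP => v vp; exact: nZ (allP a v vp).
  apply/subsetP => y' y'B.
  have [p1 [pth1 lst1 a1]] := scB y y' yB y'B.
  have [p2 [pth2 lst2 a2]] := scB y' y y'B yB.
  exact: (normal_sc nS yS (nZ _ (subsetP sbB _ yB)) pth1 lst1 (allZ _ a1) pth2 lst2 (allZ _ a2)).
have step t : beta (bag t) \subset S t ->
    exists c, beta (bag c) \subset S c /\ S c \proper S t.
  move=> sub.
  have [ne sbY _ _] := hv _ (cb2 _ (cb t)).
  case/set0Pn: ne => y yY.
  have /bigcupP [r ctr yr] := subsetP sub y yY.
  have rt : t != r.
    apply/negP => /eqP tr; subst r.
    by move/subsetP: sbY => /(_ y yY); rewrite in_setD (subsetP (Wb t) _ yr).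
  have [c etc ccr] := connect_step ctr rt.
  have yc : y \in S c by apply/bigcupP; exists r.
  have nS := Nrm t c etc.
  have cX : #|X t c| <= k by apply: leq_trans (cb t); apply: subset_leq_card; exact: outX.
  have [_ _ _ mY'] := hv _ (cb2 _ cX).
  have sY' : beta (bag t) \subset beta (X t c).
    by apply: mY'; [rewrite setIT; exact: outX | exact: cb2].
  have yY' := subsetP sY' y yY.
  have Y'S : beta (X t c) \subset S c := stay _ _ _ y cX nS (subxx _) yY' yc.
  exists c; split.
  - apply: subset_trans Y'S; apply: mY'; [rewrite setIT; exact: inX | exact: cb2].
  - apply/properP; split.
    + apply/subsetP => v /bigcupP [r' cr' vr']; apply/bigcupP; exists r' => //.
      exact: connect_trans (connect1 etc) cr'.
    + case/set0Pn: (Wne t) => w wt; exists w; first by apply/bigcupP; exists t.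
      apply/negP => /bigcupP [r' cr' wr'].
      case: (eqVneq t r') => [er|ner].
      * by subst r'; exact: (out_tree_acyclic ot etc cr').
      * by move: (disjointFr (Wdis t r' ner) wt); rewrite wr'.
have main n : forall t, #|S t| <= n -> beta (bag t) \subset S t -> False.
  elim: n => [|n IH] t cS sub; have [c [sc pc]] := step t sub.
  - by move: (proper_card pc); rewrite ltnNge (leq_trans cS (leq0n _)).
  - by apply: (IH c) => //; have := proper_card pc; lia.
case: (ot) => r0 [_ _ reach].
apply: (main #|S r0| r0 (leqnn _)).
apply/subsetP => v _.
have : v \in \bigcup_r W r by rewrite WU inE.
by case/bigcupP => r _ vr; apply/bigcupP; exists r => //; exact: reach.
Qed.


Lemma dpd_to_dtd s k (x0 : T) : is_dpd E s -> all (fun X : {set T} => #|X| <= k) s ->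
  exists m (ET : rel 'I_m) X W, is_dtd E ET X W /\ forall r, #|dtd_bag ET X W r| <= k.
Proof.
move=> [U Ar I] ws.
pose first v := find (fun X : {set T} => v \in X) s.
have hasv v : has (fun X : {set T} => v \in X) s.
  by apply/(has_nthP set0); apply/mem_bigcup_nth; rewrite U inE.
have F1 v : first v < size s by rewrite /first -has_find.
have F2 v : v \in nth set0 s (first v) by exact: (nth_find set0 (hasv v)).
have F3 v p : v \in nth set0 s p -> first v <= p.
  move=> vp; rewrite leqNgt; apply/negP => pf.
  by move: (before_find set0 pf); rewrite /= vp.
pose leT := fun u v => first u <= first v.
have leT_tot : total leT by move=> u v; exact: leq_total.
have leT_tr : transitive leT by move=> u v w; exact: leq_trans.
have leT_refl : reflexive leT by move=> u; exact: leqnn.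
pose sv := sort leT (enum T).
have sv_uniq : uniq sv by rewrite sort_uniq enum_uniq.
have sv_mem v : v \in sv by rewrite mem_sort mem_enum.
have sv_sorted : sorted leT sv := sort_sorted leT_tot _.
pose m := size sv.
have F4 a b : a <= b -> b < m -> first (nth x0 sv a) <= first (nth x0 sv b).
  move=> ab bm; have := sorted_leq_nth leT_tr leT_refl x0 sv_sorted.
  move=> /(_ a b); rewrite !inE; apply => //; exact: leq_ltn_trans ab bm.
have im v : index v sv < m by rewrite index_mem.
pose vtx (j : 'I_m) := nth x0 sv j.
pose ET := fun a b : 'I_m => (b : nat) == (a : nat).+1.
pose W := fun j : 'I_m => [set vtx j].
pose X := fun a b : 'I_m => [set v in nth set0 s (first (vtx b)) | index v sv < b].
have cle (a b : 'I_m) : connect ET a b -> a <= b.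
  case/connectP => p; elim: p a => [|c p IH] a /=; first by move=> _ ->.
  case/andP => /eqP eac pth lst; have := IH c pth lst; lia.
have cup (a b : 'I_m) : a <= b -> connect ET a b.
  suff H : forall d (a b : 'I_m), (b : nat) = a + d -> connect ET a b.
    by move=> ab; apply: (H (b - a)); lia.
  elim=> [|d IH] a' b' h.
    have -> : b' = a' by apply: val_inj; rewrite /= h addn0.
    exact: connect0.
  have bm : (b'.-1 < m) := leq_ltn_trans (leq_pred b') (ltn_ord b').
  apply: (connect_trans (IH a' (Ordinal bm) _) (connect1 _)).
    by rewrite /= h addnS.
  by rewrite /ET /= h addnS.
have m0 : 0 < m by move: (im x0); exact: leq_ltn_trans.
exists m, ET, X, W; split.
- split.
  + exists (Ordinal m0); split.
    * by move=> u; rewrite /ET.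
    * move=> v vr.
      have v0 : (v : nat) != 0.
        by apply: contra vr => /eqP h; apply/eqP; apply: val_inj.
      have pm : (v : nat).-1 < m := leq_ltn_trans (leq_pred v) (ltn_ord v).
      have -> : [set u | ET u v] = [set Ordinal pm].
        apply/setP => u; rewrite !inE /ET -(inj_eq val_inj) /=.
        by case: (nat_of_ord v) v0 => [|v'] //= _; rewrite eqSS eq_sym.
      exact: cards1.
    * by move=> v; apply: cup.
  + by move=> r; apply/set0Pn; exists (vtx r); rewrite inE.
  + move=> r r' rr'; rewrite disjoints1 inE /vtx.
    rewrite (nth_uniq x0 (ltn_ord r) (ltn_ord r') sv_uniq).
    by move: rr'; apply: contra => /eqP h; apply/eqP; exact: val_inj.
  + apply/setP => v; rewrite inE; apply/bigcupP; exists (Ordinal (im v)) => //.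
    by rewrite inE /vtx /= nth_index.
  + move=> a b eab; apply: normal_closed => u w euw.
    case/bigcupP => r cbr; rewrite inE => /eqP ur wX.
    apply/bigcupP; exists (Ordinal (im w)); last by rewrite inE /vtx /= nth_index.
    apply: cup => /=; rewrite leqNgt; apply/negP => wb.
    move/negP: wX; apply; rewrite inE wb andbT.
    have [p [q [pq ql up wq]]] := Ar u w euw.
    have h1 := F3 u p up.
    have h2 : first (vtx b) <= first u by rewrite ur; apply: F4 => //; exact: cle.
    have h3 : first w <= first (vtx b).
      by have := F4 (index w sv) b (ltnW wb) (ltn_ord b); rewrite nth_index.
    exact: (I w (first w) (first (vtx b)) q h3 (leq_trans h2 (leq_trans h1 pq)) ql (F2 w) wq).
- move=> r.
  have sb : dtd_bag ET X W r \subset nth set0 s (first (vtx r)).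
    rewrite /dtd_bag; apply/subsetP => v; rewrite !in_setU in_set1.
    case/orP => [/orP [/eqP ->|/bigcupP [u _]]|/bigcupP [c erc]].
    + exact: F2.
    + by rewrite inE => /andP [].
    + rewrite inE => /andP [vc ic].
      move: erc; rewrite /ET => /eqP ec.
      have ir : index v sv <= r by rewrite ec ltnS in ic.
      have g1 : first v <= first (vtx r).
        by have := F4 (index v sv) r ir (ltn_ord r); rewrite nth_index.
      have g2 : first (vtx r) <= first (vtx c) by apply: (F4 r c _ (ltn_ord c)); rewrite ec.
      exact: (I v (first v) _ (first (vtx c)) g1 g2 (F1 _) (F2 v) vc).
  apply: leq_trans (subset_leq_card sb) _.
  exact: (allP ws _ (mem_nth _ (F1 _))).
Qed.


Lemma max_seq_le (s : seq {set T}) n :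
  all (fun X : {set T} => #|X| <= n) s -> \max_(X <- s) #|X| <= n.
Proof.
elim: s => [|X s IH] /=; first by rewrite big_nil.
by case/andP => h1 h2; rewrite big_cons geq_max h1 IH.
Qed.

Lemma le_max_seq (s : seq {set T}) X : X \in s -> #|X| <= \max_(Y <- s) #|Y|.
Proof.
elim: s => [|Y s IH] //=; rewrite in_cons big_cons => /orP [/eqP ->|Xs].
- exact: leq_maxl.
- exact: leq_trans (IH Xs) (leq_maxr _ _).
Qed.

End G.

Unset Implicit Arguments.

Theorem theorem5p3 (T : finType) (E : rel T) :
  irreflexive E -> directed_cograph E ->
  exists k : nat, is_dpw E k /\ is_dtw E k.
Proof.
move=> _ dc.
have [k [[beta hv] [s [[U Ar I] ws]]]] := cograph_good dc.
have [ne _ _ _] := hv set0 ltac:(by rewrite set0I cards0).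
case/set0Pn: ne => x0 _.
have dps : is_dpd E s.
  by split => // u v euv; exact: Ar (in_setT u) (in_setT v) euv.
have wle : dpd_width s <= k.
  by move/max_seq_le: ws; rewrite /dpd_width; lia.
have dplow s' : is_dpd E s' -> k <= dpd_width s'.
  move=> ds'; rewrite leqNgt; apply/negP => lt.
  apply: (dpd_lower hv ds'); apply/allP => X Xs; have := le_max_seq Xs.
  by move: lt; rewrite /dpd_width; lia.
have [m [ET [X [W [dt bb]]]]] := dpd_to_dtd x0 dps ws.
have dtlow m' (ET' : rel 'I_m') X' W' : is_dtd E ET' X' W' -> k <= dtd_width ET' X' W'.
  move=> dt'; rewrite leqNgt; apply/negP => lt.
  apply: (dtd_lower hv dt') => r.
  have := @leq_bigmax _ (fun r => #|dtd_bag ET' X' W' r|) r.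
  by move: lt; rewrite /dtd_width; lia.
exists k; split; split.
- by exists s; split => //; apply/eqP; rewrite eqn_leq wle dplow.
- exact: dplow.
- exists m, ET, X, W; split => //; apply/eqP; rewrite eqn_leq dtlow // andbT.
  have : \max_r #|dtd_bag ET X W r| <= k.+1 by apply/bigmax_leqP => r _; exact: bb.
  by rewrite /dtd_width; lia.
- by move=> m' ET' X' W'; exact: dtlow.
Qed.
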